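(* Let $t\in\mathbb{R}\setminus\{0\}$, $\varepsilon\in(0,\frac1e)$ and $R:=\left\lfloor r\!\left(\frac{e|t|}{2},\frac54\varepsilon\right)/2\right\rfloor$. Then $$\sup_{x\in[-1,1]}\left|\cos(tx)-\Big(J_0(t)+2\sum_{k=1}^R(-1)^kJ_{2k}(t)T_{2k}(x)\Big)\right|\le\varepsilon,\qquad \sup_{x\in[-1,1]}\left|\sin(tx)-2\sum_{k=0}^R(-1)^kJ_{2k+1}(t)T_{2k+1}(x)\right|\le\varepsilon.$$
   Context: $J_m$ denotes the Bessel function of the first kind of order $m$; $T_m(x)=\cos(m\arccos x)$ the Chebyshev polynomial of the first kind. For $\tau>0$ and $\eta\in(0,1)$, $r(\tau,\eta)$ denotes the unique solution $r\in(\tau,\infty)$ of $\eta=(\tau/r)^r$. *)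

(* Defs.v *)
From Stdlib Require Import Reals Lra Lia ZArith ClassicalEpsilon.
Open Scope R_scope.

Definition bessel_term (m : nat) (t : R) (k : nat) : R :=
  (-1) ^ k / (INR (fact k) * INR (fact (k + m))) * (t / 2) ^ (2 * k + m).

(** Bessel function of the first kind of order m: the sum of its power series
    (which converges for every t, so the chosen limit is the unique one). *)
Definition besselJ (m : nat) (t : R) : R :=
  epsilon (inhabits 0) (fun l => infinite_sum (bessel_term m t) l).

Definition chebT (m : nat) (x : R) : R := cos (INR m * acos x).

Definition r_fun (tau eta : R) : R :=
  epsilon (inhabits 0) (fun r => tau < r /\ eta = Rpower (tau / r) r).

Fixpoint fsum (n : nat) (f : nat -> R) : R :=
  match n with
  | O => 0
  | S n' => fsum n' f + f n'
  end.

Definition Rbound (t eps : R) : nat :=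
  Z.to_nat (Int_part (r_fun (exp 1 * Rabs t / 2) (5 / 4 * eps) / 2)).

(* Main.v *)
Require Import Defs.
From Stdlib Require Import Reals Lra Lia ZArith ClassicalEpsilon.
From Coquelicot Require Import Coquelicot.
Open Scope R_scope.

Lemma fsum_ext n f g : (forall i, (i < n)%nat -> f i = g i) -> fsum n f = fsum n g.
Proof. induction n; simpl; intros H; auto. rewrite IHn; [rewrite H|]; auto; intros; apply H; lia. Qed.

Lemma fsum_plus n f g : fsum n (fun i => f i + g i) = fsum n f + fsum n g.
Proof. induction n; simpl; [lra| rewrite IHn; lra]. Qed.

Lemma fsum_scal n c f : fsum n (fun i => c * f i) = c * fsum n f.
Proof. induction n; simpl; [lra| rewrite IHn; lra]. Qed.

Lemma fsum_opp n f : fsum n (fun i => - f i) = - fsum n f.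
Proof. induction n; simpl; [lra| rewrite IHn; lra]. Qed.

Lemma fsum_shift n f : fsum (S n) f = f 0%nat + fsum n (fun i => f (S i)).
Proof. induction n; simpl in *; [lra| rewrite IHn; lra]. Qed.

Lemma fsum_le n f g : (forall i, (i < n)%nat -> f i <= g i) -> fsum n f <= fsum n g.
Proof. induction n; simpl; intros H; [lra|]. assert (f n <= g n) by (apply H; lia).
 assert (fsum n f <= fsum n g) by (apply IHn; intros; apply H; lia). lra. Qed.

Lemma fsum_abs n f : Rabs (fsum n f) <= fsum n (fun i => Rabs (f i)).
Proof. induction n; simpl. rewrite Rabs_R0; lra.
 eapply Rle_trans; [apply Rabs_triang|]. lra. Qed.

Lemma fsum_nonneg n f : (forall i, (i < n)%nat -> 0 <= f i) -> 0 <= fsum n f.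
Proof. intros H; replace 0 with (fsum n (fun _ => 0)). apply fsum_le; auto.
 clear; induction n; simpl; lra. Qed.

Lemma fsum_add n m f : fsum (n + m) f = fsum n f + fsum m (fun i => f (n + i)%nat).
Proof. induction m; simpl. rewrite Nat.add_0_r; lra. rewrite Nat.add_succ_r; simpl; rewrite IHm; lra. Qed.

Lemma fsum_sum_f_R0 n f : fsum (S n) f = sum_f_R0 f n.
Proof. induction n; simpl; [lra|]. simpl in IHn; rewrite <- IHn; lra. Qed.

Lemma fsum_sum_n n f : fsum (S n) f = sum_n f n.
Proof. rewrite sum_n_Reals. apply fsum_sum_f_R0. Qed.

Lemma fsum_S n f : fsum (S n) f = fsum n f + f n.
Proof. reflexivity. Qed.

Lemma fsum_triangle N (F : nat -> nat -> R) :
  fsum N (fun n => fsum (S n) (fun k => F k (n - k)%nat)) =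
  fsum N (fun k => fsum (N - k) (fun a => F k a)).
Proof.
  induction N. reflexivity.
  rewrite fsum_S, IHN, fsum_S, (fsum_S N (fun k => fsum (S N - k) (fun a => F k a))).
  rewrite Nat.sub_diag. replace (S N - N)%nat with 1%nat by lia.
  rewrite (fsum_ext N (fun k => fsum (S N - k) (fun a => F k a))
     (fun k => fsum (N - k) (fun a => F k a) + F k (N - k)%nat)).
  rewrite fsum_plus. simpl (fsum 1 _). lra.
  intros i Hi. replace (S N - i)%nat with (S (N - i)) by lia. reflexivity.
Qed.

Lemma pair_even n : forall f, fsum (2 * n + 1) f =
   f n + fsum n (fun k => f (n - S k)%nat + f (n + S k)%nat).
Proof.
  induction n; intros f. simpl; lra.
  replace (2 * S n + 1)%nat with (S (S (2 * n + 1))) by lia.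
  rewrite fsum_S, fsum_shift, IHn, fsum_S.
  replace (S n - S n)%nat with 0%nat by lia.
  replace (S n + S n)%nat with (S (2 * n + 1))%nat by lia.
  rewrite (fsum_ext n (fun i => f (S (n - S i)) + f (S (n + S i)))
    (fun k => f (S n - S k)%nat + f (S n + S k)%nat)). lra.
  intros i Hi. f_equal; f_equal; lia.
Qed.

Lemma pair_odd n : forall f, fsum (2 * n + 2) f =
   fsum (S n) (fun k => f (n - k)%nat + f (n + 1 + k)%nat).
Proof.
  induction n; intros f. simpl; lra.
  replace (2 * S n + 2)%nat with (S (S (2 * n + 2))) by lia.
  rewrite fsum_S, fsum_shift, IHn, (fsum_S (S n)).
  replace (S n - S n)%nat with 0%nat by lia.
  replace (S n + 1 + S n)%nat with (S (2 * n + 2))%nat by lia.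
  rewrite (fsum_ext (S n) (fun i => f (S (n - i)) + f (S (n + 1 + i)))
    (fun k => f (S n - k)%nat + f (S n + 1 + k)%nat)). lra.
  intros i Hi. f_equal; f_equal; lia.
Qed.

Notation Cb := Binomial.C.

Lemma Cb_n0 n : Cb n 0 = 1.
Proof. unfold Binomial.C. rewrite Nat.sub_0_r. simpl. field. apply INR_fact_neq_0. Qed.
Lemma Cb_nn n : Cb n n = 1.
Proof. unfold Binomial.C. rewrite Nat.sub_diag. simpl. field. apply INR_fact_neq_0. Qed.

Lemma pascal_sum M f : fsum (S (S M)) (fun j => Cb (S M) j * f j) =
  fsum (S M) (fun j => Cb M j * f j) + fsum (S M) (fun j => Cb M j * f (S j)).
Proof.
  rewrite fsum_shift, fsum_S, (fsum_shift M), (fsum_S M (fun j => Cb M j * f (S j))).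
  rewrite !Cb_n0, !Cb_nn.
  rewrite (fsum_ext M (fun i => Cb (S M) (S i) * f (S i))
     (fun i => Cb M i * f (S i) + Cb M (S i) * f (S i))).
  rewrite fsum_plus. lra.
  intros i Hi. rewrite <- pascal by lia. ring.
Qed.

Lemma cos_power M : forall a b,
  fsum (S M) (fun j => Cb M j * cos (a + (INR M - 2 * INR j) * b)) = (2 * cos b) ^ M * cos a.
Proof.
  induction M; intros a b.
  - simpl. rewrite Cb_nn. replace (a + (0 - 2 * 0) * b) with a by ring. ring.
  - rewrite pascal_sum.
    rewrite (fsum_ext (S M) (fun j => Cb M j * cos (a + (INR (S M) - 2 * INR j) * b))
       (fun j => Cb M j * cos ((a + b) + (INR M - 2 * INR j) * b))).
    rewrite (fsum_ext (S M) (fun j => Cb M j * cos (a + (INR (S M) - 2 * INR (S j)) * b))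
       (fun j => Cb M j * cos ((a - b) + (INR M - 2 * INR j) * b))).
    rewrite !IHM. rewrite cos_plus, cos_minus. simpl. ring.
    + intros i _. f_equal. f_equal. rewrite !S_INR. ring.
    + intros i _. f_equal. f_equal. rewrite !S_INR. ring.
Qed.

Lemma fact_nz n : INR (fact n) <> 0.
Proof. apply INR_fact_neq_0. Qed.

Lemma diag_cos_term K a t th :
  (-1) ^ (K + a) / INR (fact (2 * (K + a))) * (t / 2) ^ (2 * (K + a)) *
  (Cb (2 * (K + a)) (K + a - K) * cos (0 + (INR (2 * (K + a)) - 2 * INR (K + a - K)) * th) +
   Cb (2 * (K + a)) (K + a + K) * cos (0 + (INR (2 * (K + a)) - 2 * INR (K + a + K)) * th))
  = 2 * (-1) ^ K * cos (INR (2 * K) * th) * bessel_term (2 * K) t (K + a - K).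
Proof.
  replace (K + a - K)%nat with a by lia.
  replace (0 + (INR (2 * (K + a)) - 2 * INR a) * th) with (INR (2 * K) * th)
    by (rewrite !mult_INR, !plus_INR; simpl; ring).
  replace (0 + (INR (2 * (K + a)) - 2 * INR (K + a + K)) * th) with (- (INR (2 * K) * th))
    by (rewrite !mult_INR, !plus_INR; simpl; ring).
  rewrite cos_neg. unfold Binomial.C, bessel_term.
  replace (2 * (K + a) - a)%nat with (a + 2 * K)%nat by lia.
  replace (2 * (K + a) - (K + a + K))%nat with a by lia.
  replace (2 * (K + a))%nat with (2 * a + 2 * K)%nat at 2 by lia.
  rewrite pow_add.
  replace (K + a + K)%nat with (a + 2 * K)%nat by lia. field. repeat split; apply fact_nz.
Qed.

Lemma diag_cos_0 n t th :
  (-1) ^ n / INR (fact (2 * n)) * (t / 2) ^ (2 * n) *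
  (Cb (2 * n) n * cos (0 + (INR (2 * n) - 2 * INR n) * th))
  = 1 * (-1) ^ 0 * cos (INR (2 * 0) * th) * bessel_term (2 * 0) t (n - 0).
Proof.
  replace (0 + (INR (2 * n) - 2 * INR n) * th) with 0 by (rewrite mult_INR; simpl; ring).
  replace (INR (2 * 0) * th) with 0 by (simpl; ring). rewrite cos_0.
  unfold Binomial.C, bessel_term. replace (2 * n - n)%nat with n by lia.
  replace (n - 0)%nat with n by lia. replace (n + 2 * 0)%nat with n by lia.
  replace (2 * n + 2 * 0)%nat with (2 * n)%nat by lia.
  field. repeat split; apply fact_nz.
Qed.

Definition wcos (k : nat) : R := match k with O => 1 | S _ => 2 end.

Lemma diag_cos n t th :
  (-1) ^ n / INR (fact (2 * n)) * ((t * cos th) ^ 2) ^ n =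
  fsum (S n) (fun k => wcos k * (-1) ^ k * cos (INR (2 * k) * th) * bessel_term (2 * k) t (n - k)).
Proof.
  assert (E : ((t * cos th) ^ 2) ^ n = (t / 2) ^ (2 * n) * (2 * cos th) ^ (2 * n)).
  { rewrite <- pow_mult, <- Rpow_mult_distr. f_equal. field. }
  rewrite E. rewrite <- (Rmult_1_r ((2 * cos th) ^ (2 * n))). rewrite <- cos_0.
  rewrite <- cos_power. replace (S (2 * n)) with (2 * n + 1)%nat by lia.
  rewrite pair_even.
  rewrite <- Rmult_assoc, Rmult_plus_distr_l, <- fsum_scal.
  rewrite fsum_shift. rewrite diag_cos_0. f_equal.
  apply fsum_ext. intros k Hk.
  destruct (Nat.le_exists_sub (S k) n) as [a [Ha _]]; [lia|].
  replace (n - S k)%nat with (a + S k - S k)%nat by lia.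
  replace (n + S k)%nat with (a + S k + S k)%nat by lia.
  subst n. rewrite (Nat.add_comm a (S k)).
  rewrite <- diag_cos_term. reflexivity.
Qed.

Lemma diag_sin_term k a t th :
  (-1) ^ (k + a) / INR (fact (2 * (k + a) + 1)) * (t / 2) ^ (2 * (k + a) + 1) *
  (Cb (2 * (k + a) + 1) (k + a - k) * cos (0 + (INR (2 * (k + a) + 1) - 2 * INR (k + a - k)) * th) +
   Cb (2 * (k + a) + 1) (k + a + 1 + k) * cos (0 + (INR (2 * (k + a) + 1) - 2 * INR (k + a + 1 + k)) * th))
  = 2 * (-1) ^ k * cos (INR (2 * k + 1) * th) * bessel_term (2 * k + 1) t (k + a - k).
Proof.
  replace (k + a - k)%nat with a by lia.
  replace (0 + (INR (2 * (k + a) + 1) - 2 * INR a) * th) with (INR (2 * k + 1) * th)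
    by (rewrite !plus_INR, !mult_INR, !plus_INR; simpl; ring).
  replace (0 + (INR (2 * (k + a) + 1) - 2 * INR (k + a + 1 + k)) * th) with (- (INR (2 * k + 1) * th))
    by (rewrite !plus_INR, !mult_INR, !plus_INR; simpl; ring).
  rewrite cos_neg. unfold Binomial.C, bessel_term.
  replace (2 * (k + a) + 1 - a)%nat with (a + (2 * k + 1))%nat by lia.
  replace (2 * (k + a) + 1 - (k + a + 1 + k))%nat with a by lia.
  replace (k + a + 1 + k)%nat with (a + (2 * k + 1))%nat by lia.
  replace (2 * (k + a) + 1)%nat with (2 * a + (2 * k + 1))%nat at 2 by lia.
  rewrite pow_add.
  field. repeat split; apply fact_nz.
Qed.

Lemma diag_sin n t th :
  (-1) ^ n / INR (fact (2 * n + 1)) * ((t * cos th) ^ 2) ^ n * (t * cos th) =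
  fsum (S n) (fun k => 2 * (-1) ^ k * cos (INR (2 * k + 1) * th) * bessel_term (2 * k + 1) t (n - k)).
Proof.
  assert (E : ((t * cos th) ^ 2) ^ n * (t * cos th) = (t / 2) ^ (2 * n + 1) * (2 * cos th) ^ (2 * n + 1)).
  { rewrite <- pow_mult. rewrite <- (pow_1 (t * cos th)) at 2. rewrite <- pow_add.
    rewrite <- Rpow_mult_distr. f_equal. field. }
  rewrite Rmult_assoc, E. rewrite <- (Rmult_1_r ((2 * cos th) ^ (2 * n + 1))). rewrite <- cos_0.
  rewrite <- cos_power. replace (S (2 * n + 1)) with (2 * n + 2)%nat by lia.
  rewrite pair_odd.
  rewrite <- Rmult_assoc, <- fsum_scal.
  apply fsum_ext. intros k Hk.
  destruct (Nat.le_exists_sub k n) as [a [Ha _]]; [lia|].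
  replace (n - k)%nat with (k + a - k)%nat by lia.
  replace (n + 1 + k)%nat with (k + a + 1 + k)%nat by lia.
  subst n. rewrite (Nat.add_comm a k).
  rewrite <- diag_sin_term. reflexivity.
Qed.

Definition ac (m j : nat) : R :=
  (-1) ^ j * INR (fact m) / (4 ^ j * INR (fact j) * INR (fact (j + m))).

Lemma fact_nz' n : INR (fact n) <> 0.
Proof. apply INR_fact_neq_0. Qed.

Lemma ac_rec m j : ac m (S j) = - ac m j / (4 * INR (S j) * INR (S j + m)).
Proof.
  unfold ac. replace (S j + m)%nat with (S (j + m)) by lia.
  rewrite !fact_simpl, !mult_INR. simpl pow.
  assert (0 < INR (S j)) by (apply lt_0_INR; lia).
  assert (0 < INR (S (j + m))) by (apply lt_0_INR; lia).
  field. repeat split; try apply fact_nz'; try lra. apply pow_nonzero; lra.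
Qed.

Lemma ac_nz m j : ac m j <> 0.
Proof.
  unfold ac. apply Rmult_integral_contrapositive_currified.
  apply Rmult_integral_contrapositive_currified. apply pow_nonzero; lra. apply fact_nz'.
  apply Rinv_neq_0_compat. repeat apply Rmult_integral_contrapositive_currified; try apply fact_nz'.
  apply pow_nonzero; lra.
Qed.

Lemma ac_radius m : CV_radius (ac m) = p_infty.
Proof.
  apply CV_radius_infinite_DAlembert. apply ac_nz.
  apply is_lim_seq_le_le with (u := fun _ => 0) (w := fun n => / INR (S n)).
  - intros n. rewrite ac_rec.
    assert (0 < INR (S n)) by (apply lt_0_INR; lia).
    assert (1 <= INR (S n + m)) by (apply (le_INR 1); lia).
    replace (- ac m n / (4 * INR (S n) * INR (S n + m)) / ac m n) with
      (- / (4 * INR (S n) * INR (S n + m))) by (field; split; [lra|]; split; [lra| apply ac_nz]).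
    rewrite Rabs_Ropp, Rabs_right.
    2: { left; apply Rinv_0_lt_compat; nra. }
    split. left; apply Rinv_0_lt_compat; nra.
    apply Rinv_le_contravar; nra.
  - apply is_lim_seq_const.
  - apply (is_lim_seq_incr_1 (fun n => / INR n)).
    replace (Finite 0) with (Rbar_inv p_infty) by reflexivity.
    apply is_lim_seq_inv. apply is_lim_seq_INR. discriminate.
Qed.

Definition phi0 m z := PSeries (ac m) z.
Definition phi1 m z := PSeries (PS_derive (ac m)) z.
Definition phi2 m z := PSeries (PS_derive (PS_derive (ac m))) z.

Lemma rad1 m : CV_radius (PS_derive (ac m)) = p_infty.
Proof. rewrite CV_radius_derive; apply ac_radius. Qed.
Lemma rad2 m : CV_radius (PS_derive (PS_derive (ac m))) = p_infty.
Proof. rewrite CV_radius_derive; apply rad1. Qed.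

Lemma in_rad (a : nat -> R) x : CV_radius a = p_infty -> Rbar_lt (Rabs x) (CV_radius a).
Proof. intros H; rewrite H; exact I. Qed.

Lemma ac_0 m : ac m 0 = 1.
Proof. unfold ac. simpl. field. apply fact_nz'. Qed.

Lemma ode m z : 4 * z * phi2 m z + (4 * INR m + 4) * phi1 m z + phi0 m z = 0.
Proof.
  pose (a := ac m). pose (c := PS_derive a). pose (b := PS_derive c).
  assert (Ha : is_pseries a z (phi0 m z)) by (apply PSeries_correct, CV_radius_inside, in_rad, ac_radius).
  assert (Hc : is_pseries c z (phi1 m z)) by (apply PSeries_correct, CV_radius_inside, in_rad, rad1).
  assert (Hb : is_pseries b z (phi2 m z)) by (apply PSeries_correct, CV_radius_inside, in_rad, rad2).
  apply is_pseries_incr_1 in Hb.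
  apply (is_pseries_scal 4) in Hb; [|apply Rmult_comm].
  apply (is_pseries_scal (4 * INR m + 4)) in Hc; [|apply Rmult_comm].
  pose proof (is_pseries_plus _ _ _ _ _ (is_pseries_plus _ _ _ _ _ Hb Hc) Ha) as H.
  apply is_pseries_unique in H.
  rewrite (PSeries_ext _ (fun _ => 0)) in H.
  - rewrite PSeries_const_0 in H. unfold plus, scal in H; simpl in H.
    unfold mult in H; simpl in H. lra.
  - intros n. unfold PS_plus, PS_scal, PS_incr_1, b, c, PS_derive, a.
    unfold plus, scal; simpl; unfold mult; simpl. destruct n.
    + rewrite ac_rec, ac_0. unfold zero.
      replace (S 0 + m)%nat with (S m) by lia. replace (AbelianMonoid.zero _ _) with 0 by reflexivity. rewrite (S_INR m).
      replace (INR 1) with 1 by reflexivity.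
      assert (0 <= INR m) by apply pos_INR. field. lra.
    + rewrite (ac_rec m (S n)).
      assert (0 < INR (S n)) by (apply lt_0_INR; lia).
      assert (0 < INR (S (S n) + m)) by (apply lt_0_INR; lia).
      replace (INR (S (S n) + m)) with (INR (S n) + 1 + INR m) by
        (rewrite plus_INR, !S_INR; ring).
      rewrite !S_INR. rewrite S_INR in H0.
      assert (0 <= INR m) by apply pos_INR.
      change (match n with 0%nat => 1 | S _ => INR n + 1 end) with (INR (S n)). rewrite S_INR. field. split; lra.
Qed.

Lemma d_phi0 m z : is_derive (phi0 m) z (phi1 m z).
Proof. apply is_derive_PSeries, in_rad, ac_radius. Qed.
Lemma d_phi1 m z : is_derive (phi1 m) z (phi2 m z).
Proof. apply is_derive_PSeries, in_rad, rad1. Qed.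

Definition En m z := phi0 m z ^ 2 + 4 * z * phi1 m z ^ 2.

Lemma d_En m z : is_derive (En m) z (- (8 * INR m + 4) * phi1 m z ^ 2).
Proof.
  unfold En. auto_derive.
  - split. eexists; apply d_phi0. split; auto. eexists; apply d_phi1.
  - replace (Derive (fun x : R => phi0 m x) z) with (phi1 m z)
      by (symmetry; apply is_derive_unique; apply d_phi0).
    replace (Derive (fun x : R => phi1 m x) z) with (phi2 m z)
      by (symmetry; apply is_derive_unique; apply d_phi1).
    pose proof (ode m z). nra.
Qed.

Lemma phi0_bound m z : 0 <= z -> Rabs (phi0 m z) <= 1.
Proof.
  intros Hz.
  destruct (MVT_cor4 (En m) (fun c => - (8 * INR m + 4) * phi1 m c ^ 2) 0 z)
    with (b := z) as [c [Hc _]].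
  - intros c _. apply d_En.
  - rewrite Rminus_0_r, Rabs_right; lra.
  - assert (E0 : En m 0 = 1).
    { unfold En, phi0. rewrite PSeries_0, ac_0. ring. }
    assert (0 <= INR m) by apply pos_INR.
    assert (0 <= phi1 m c ^ 2) by (apply pow2_ge_0).
    assert (0 <= phi1 m z ^ 2) by (apply pow2_ge_0).
    assert (0 <= (8 * INR m + 4) * phi1 m c ^ 2 * z) by (apply Rmult_le_pos; [apply Rmult_le_pos|]; lra).
    assert (HE : En m z <= 1) by nra.
    unfold En in HE.
    assert (0 <= 4 * z * phi1 m z ^ 2) by (apply Rmult_le_pos; lra).
    assert (phi0 m z ^ 2 <= 1) by lra.
    apply Rabs_le. nra.
Qed.

Lemma bessel_series m t :
  is_series (bessel_term m t) ((t / 2) ^ m / INR (fact m) * phi0 m (t ^ 2)).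
Proof.
  assert (H : is_pseries (ac m) (t ^ 2) (phi0 m (t ^ 2))).
  { apply PSeries_correct, CV_radius_inside, in_rad, ac_radius. }
  apply is_pseries_R in H.
  apply (is_series_scal_l ((t / 2) ^ m / INR (fact m))) in H.
  eapply is_series_ext; [|exact H].
  intros n. unfold scal; simpl; unfold mult; simpl. unfold bessel_term, ac.
  rewrite pow_add, pow_mult.
  replace ((t / 2) ^ 2) with (t * (t * 1) * / 4) by field.
  rewrite (Rpow_mult_distr (t * (t * 1)) (/ 4)), pow_inv.
  rewrite (Nat.add_comm n m).
  field. repeat split; try apply fact_nz'; apply pow_nonzero; lra.
Qed.

Lemma besselJ_eq m t : besselJ m t = (t / 2) ^ m / INR (fact m) * phi0 m (t ^ 2).
Proof.
  unfold besselJ.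
  assert (Hs := bessel_series m t).
  assert (Hex : exists l, infinite_sum (bessel_term m t) l).
  { eexists. apply is_series_Reals. exact Hs. }
  pose proof (epsilon_spec (inhabits 0) _ Hex) as H. simpl in H.
  apply is_series_Reals in H. apply is_series_unique in H. apply is_series_unique in Hs.
  etransitivity; [symmetry; exact H|exact Hs].
Qed.

Lemma besselJ_bound m t : Rabs (besselJ m t) <= Rabs (t / 2) ^ m / INR (fact m).
Proof.
  rewrite besselJ_eq. rewrite Rabs_mult.
  assert (0 < INR (fact m)) by (apply INR_fact_lt_0).
  assert (HA : Rabs ((t / 2) ^ m / INR (fact m)) = Rabs (t / 2) ^ m / INR (fact m)).
  { rewrite RPow_abs. set (u := (t / 2) ^ m). unfold Rdiv. rewrite Rabs_mult, Rabs_inv, (Rabs_right (INR (fact m))) by lra.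
    reflexivity. }
  rewrite HA.
  assert (0 <= Rabs (t / 2) ^ m) by (apply pow_le, Rabs_pos).
  assert (Rabs (phi0 m (t ^ 2)) <= 1) by (apply phi0_bound, pow2_ge_0).
  assert (0 <= Rabs (t / 2) ^ m / INR (fact m)) by (apply Rmult_le_pos; [lra| left; apply Rinv_0_lt_compat; lra]).
  rewrite <- (Rmult_1_r (Rabs (t / 2) ^ m / INR (fact m))) at 2.
  apply Rmult_le_compat_l; assumption.
Qed.

Lemma lim_fsum a l : infinite_sum a l -> is_lim_seq (fun N => fsum N a) l.
Proof.
  intros H. apply is_lim_seq_incr_1.
  apply (is_lim_seq_ext (fun n => sum_f_R0 a n)). intros; symmetry; apply fsum_sum_f_R0.
  apply is_lim_seq_Reals. exact H.
Qed.

Lemma exp_partial x : is_lim_seq (fun N => fsum N (fun j => x ^ j / INR (fact j))) (exp x).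
Proof.
  apply (is_lim_seq_ext (fun N => fsum N (fun i => / INR (fact i) * x ^ i))).
  intros; apply fsum_ext; intros; unfold Rdiv; ring.
  apply lim_fsum. unfold exp. destruct (exist_exp x) as [l Hl]. simpl. exact Hl.
Qed.

Lemma exp_partial_le x N : 0 <= x -> fsum N (fun j => x ^ j / INR (fact j)) <= exp x.
Proof.
  intros Hx.
  apply (is_lim_seq_incr_compare (fun N => fsum N (fun j => x ^ j / INR (fact j)))).
  apply exp_partial. intros n. simpl. assert (0 <= x ^ n / INR (fact n)).
  { apply Rmult_le_pos. apply pow_le; auto. left; apply Rinv_0_lt_compat, INR_fact_lt_0. }
  lra.
Qed.

Lemma cos_lim y : is_lim_seq (fun N => fsum N (fun n => (-1) ^ n / INR (fact (2 * n)) * (y ^ 2) ^ n)) (cos y).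
Proof.
  unfold cos. destruct (exist_cos (Rsqr y)) as [l Hl].
  apply lim_fsum. unfold cos_in, cos_n in Hl. rewrite Rsqr_pow2 in Hl. exact Hl.
Qed.

Lemma sin_lim y : is_lim_seq (fun N => fsum N (fun n => (-1) ^ n / INR (fact (2 * n + 1)) * (y ^ 2) ^ n * y)) (sin y).
Proof.
  unfold sin. destruct (exist_sin (Rsqr y)) as [l Hl].
  apply lim_fsum in Hl. unfold sin_n in Hl. rewrite Rsqr_pow2 in Hl.
  apply (is_lim_seq_scal_r _ y) in Hl.
  eapply is_lim_seq_ext; [|replace (y * l) with (l * y) by ring; exact Hl].
  intros N. cbv beta. rewrite Rmult_comm, <- fsum_scal.
  apply fsum_ext; intros; ring.
Qed.

Lemma fact_prod a b : (fact a * fact b <= fact (a + b))%nat.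
Proof.
  induction a; simpl. lia.
  pose proof (lt_O_fact (a + b)). nia.
Qed.

Lemma bessel_lim m t : is_lim_seq (fun L => fsum L (bessel_term m t)) (besselJ m t).
Proof. rewrite besselJ_eq. apply lim_fsum. apply is_series_Reals. apply bessel_series. Qed.

Lemma abs_bt m t k : Rabs (bessel_term m t k) = Rabs (t / 2) ^ (2 * k + m) / (INR (fact k) * INR (fact (k + m))).
Proof.
  unfold bessel_term. set (u := t / 2). unfold Rdiv. rewrite !Rabs_mult, Rabs_inv, <- !RPow_abs, Rabs_m1, pow1.
  rewrite (Rabs_right (INR (fact k) * INR (fact (k + m)))). ring.
  apply Rle_ge, Rmult_le_pos; apply pos_INR.
Qed.

Lemma bessel_tail m t M :
  Rabs (besselJ m t - fsum M (bessel_term m t)) <=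
  Rabs (t / 2) ^ m / INR (fact m) * (Rabs (t / 2) ^ (2 * M) / INR (fact M)) * exp ((t / 2) ^ 2).
Proof.
  set (s := Rabs (t / 2)).
  assert (Hs : 0 <= s) by apply Rabs_pos.
  set (K := s ^ m / INR (fact m) * (s ^ (2 * M) / INR (fact M))).
  assert (HK : 0 <= K).
  { unfold K. apply Rmult_le_pos; apply Rmult_le_pos; try apply pow_le; auto;
    left; apply Rinv_0_lt_compat, INR_fact_lt_0. }
  assert (Hlim : is_lim_seq (fun L => Rabs (fsum (L + M) (bessel_term m t) - fsum M (bessel_term m t)))
     (Rabs (besselJ m t - fsum M (bessel_term m t)))).
  { apply (is_lim_seq_abs _ (Finite (besselJ m t - fsum M (bessel_term m t)))).
    apply is_lim_seq_minus'. apply (is_lim_seq_incr_n (fun L => fsum L (bessel_term m t))).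
    apply bessel_lim. apply is_lim_seq_const. }
  assert (Hb : forall L, Rabs (fsum (L + M) (bessel_term m t) - fsum M (bessel_term m t)) <= K * exp ((t / 2) ^ 2)).
  { intros L. rewrite Nat.add_comm, fsum_add.
    replace (fsum M (bessel_term m t) + fsum L (fun i => bessel_term m t (M + i)) - fsum M (bessel_term m t))
      with (fsum L (fun i => bessel_term m t (M + i))) by ring.
    eapply Rle_trans; [apply fsum_abs|].
    eapply Rle_trans with (fsum L (fun i => K * ((s ^ 2) ^ i / INR (fact i)))).
    - apply fsum_le. intros i _. rewrite abs_bt. fold s. unfold K.
      assert (F1 := fact_prod M i). assert (F2 := fact_prod (M + i) m).
      assert (F3 := fact_prod m (M + i)).
      apply le_INR in F1. apply le_INR in F3. rewrite mult_INR in F1, F3.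
      replace (m + (M + i))%nat with (M + i + m)%nat in F3 by lia.
      assert (P1 := INR_fact_lt_0 M). assert (P2 := INR_fact_lt_0 i).
      assert (P3 := INR_fact_lt_0 m). assert (P4 := INR_fact_lt_0 (M + i)).
      assert (P5 := INR_fact_lt_0 (M + i + m)).
      replace (s ^ (2 * (M + i) + m)) with (s ^ m * s ^ (2 * M) * (s ^ 2) ^ i)
        by (rewrite <- pow_mult, <- !pow_add; f_equal; lia).
      assert (0 <= s ^ m * s ^ (2 * M) * (s ^ 2) ^ i) by (repeat apply Rmult_le_pos; apply pow_le; auto; apply pow_le; auto).
      unfold Rdiv.
      replace (s ^ m * / INR (fact m) * (s ^ (2 * M) * / INR (fact M)) * ((s ^ 2) ^ i * / INR (fact i)))
        with ((s ^ m * s ^ (2 * M) * (s ^ 2) ^ i) * / (INR (fact M) * INR (fact i) * INR (fact m)))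
        by (field; repeat split; lra).
      apply Rmult_le_compat_l; auto.
      apply Rinv_le_contravar. repeat apply Rmult_lt_0_compat; lra.
      apply Rle_trans with (INR (fact (M + i)) * INR (fact m)).
      apply Rmult_le_compat_r; lra. apply Rmult_le_compat_l; [lra|]. apply le_INR, fact_le; lia.
    - rewrite fsum_scal. apply Rmult_le_compat_l; auto.
      unfold s. rewrite pow2_abs. apply exp_partial_le. apply pow2_ge_0. }
  pose proof (is_lim_seq_le _ _ _ _ Hb Hlim (is_lim_seq_const _)) as H. simpl in H.
  exact H.
Qed.

Lemma binom_sum N : fsum (S N) (fun k => / (INR (fact k) * INR (fact (N - k)))) = 2 ^ N / INR (fact N).
Proof.
  pose proof (cos_power N 0 0) as H. rewrite cos_0, Rmult_1_r, Rmult_1_r in H.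
  rewrite (fsum_ext _ _ (fun j => Cb N j)) in H.
  2:{ intros i _. replace (0 + (INR N - 2 * INR i) * 0) with 0 by ring. rewrite cos_0; ring. }
  unfold Binomial.C in H. unfold Rdiv in H.
  rewrite fsum_scal in H.
  assert (P := INR_fact_lt_0 N).
  apply (Rmult_eq_compat_l (/ INR (fact N))) in H. rewrite <- Rmult_assoc, Rinv_l in H by lra.
  rewrite Rmult_1_l in H. rewrite H. unfold Rdiv. ring.
Qed.

Lemma SQ_diff p t (cc : nat -> R) N : (forall k, Rabs (cc k) <= 2) ->
  Rabs (fsum N (fun k => cc k * fsum (N - k) (bessel_term (2 * k + p) t)) -
        fsum N (fun k => cc k * besselJ (2 * k + p) t)) <=
  2 * exp ((t / 2) ^ 2) * Rabs (t / 2) ^ p * (2 * (t / 2) ^ 2) ^ N / INR (fact N).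
Proof.
  intros Hc. set (s := Rabs (t / 2)). assert (Hs : 0 <= s) by apply Rabs_pos.
  set (X := exp ((t / 2) ^ 2)). assert (HX : 0 < X) by apply exp_pos.
  replace (fsum N (fun k => cc k * fsum (N - k) (bessel_term (2 * k + p) t)) -
           fsum N (fun k => cc k * besselJ (2 * k + p) t))
    with (fsum N (fun k => - cc k * (besselJ (2 * k + p) t - fsum (N - k) (bessel_term (2 * k + p) t))))
    by (symmetry; unfold Rminus; rewrite <- fsum_opp, <- fsum_plus; apply fsum_ext; intros; ring).
  eapply Rle_trans; [apply fsum_abs|].
  eapply Rle_trans with (fsum N (fun k => 2 * X * s ^ p * (s ^ 2) ^ N * / (INR (fact k) * INR (fact (N - k))))).
  - apply fsum_le. intros k Hk. rewrite Rabs_mult, Rabs_Ropp.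
    assert (T := bessel_tail (2 * k + p) t (N - k)). fold s X in T.
    assert (0 <= Rabs (besselJ (2 * k + p) t - fsum (N - k) (bessel_term (2 * k + p) t))) by apply Rabs_pos.
    apply Rle_trans with (2 * Rabs (besselJ (2 * k + p) t - fsum (N - k) (bessel_term (2 * k + p) t))).
    apply Rmult_le_compat_r; auto.
    rewrite Rmult_assoc, Rmult_assoc, Rmult_assoc. apply Rmult_le_compat_l; [lra|].
    eapply Rle_trans; [exact T|].
    assert (F : INR (fact k) <= INR (fact (2 * k + p))) by (apply le_INR, fact_le; lia).
    assert (P1 := INR_fact_lt_0 k). assert (P2 := INR_fact_lt_0 (N - k)). assert (P3 := INR_fact_lt_0 (2 * k + p)).
    replace (s ^ (2 * k + p) / INR (fact (2 * k + p)) * (s ^ (2 * (N - k)) / INR (fact (N - k))) * X)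
      with (X * (s ^ p * (s ^ 2) ^ N) * / (INR (fact (2 * k + p)) * INR (fact (N - k)))).
    2: { rewrite <- pow_mult, <- !pow_add. replace (p + 2 * N)%nat with (2 * k + p + 2 * (N - k))%nat by lia.
         rewrite pow_add. field. split; lra. }
    replace (X * (s ^ p * ((s ^ 2) ^ N * / (INR (fact k) * INR (fact (N - k))))))
      with (X * (s ^ p * (s ^ 2) ^ N) * / (INR (fact k) * INR (fact (N - k)))) by ring.
    assert (0 <= X * (s ^ p * (s ^ 2) ^ N)) by (apply Rmult_le_pos; [lra| apply Rmult_le_pos; apply pow_le; auto; apply pow_le; auto]).
    apply Rmult_le_compat_l; auto. apply Rinv_le_contravar. nra.
    apply Rmult_le_compat_r; lra.
  - rewrite fsum_scal.
    assert (Hsum : fsum N (fun k => / (INR (fact k) * INR (fact (N - k)))) <= 2 ^ N / INR (fact N)).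
    { rewrite <- binom_sum. simpl. assert (0 < / (INR (fact N) * INR (fact (N - N)))).
      { apply Rinv_0_lt_compat, Rmult_lt_0_compat; apply INR_fact_lt_0. } lra. }
    assert (0 <= 2 * X * s ^ p * (s ^ 2) ^ N) by (repeat apply Rmult_le_pos; try lra; apply pow_le; auto; apply pow_le; auto).
    eapply Rle_trans. apply Rmult_le_compat_l; [auto|exact Hsum].
    unfold s. rewrite pow2_abs. rewrite Rpow_mult_distr. unfold Rdiv. right. ring.
Qed.

Lemma generic p t (L : R) (cc : nat -> R) R0 B :
  (forall k, Rabs (cc k) <= 2) ->
  is_lim_seq (fun N => fsum N (fun k => cc k * fsum (N - k) (bessel_term (2 * k + p) t))) L ->
  (forall n, 2 * fsum n (fun i => Rabs (t / 2) ^ (2 * (S R0 + i) + p) / INR (fact (2 * (S R0 + i) + p))) <= B) ->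
  Rabs (L - fsum (S R0) (fun k => cc k * besselJ (2 * k + p) t)) <= B.
Proof.
  intros Hc HS HB.
  set (Q := fun N => fsum N (fun k => cc k * besselJ (2 * k + p) t)).
  set (S' := fun N => fsum N (fun k => cc k * fsum (N - k) (bessel_term (2 * k + p) t))).
  set (Cst := 2 * exp ((t / 2) ^ 2) * Rabs (t / 2) ^ p).
  assert (HD : is_lim_seq (fun N => Cst * ((2 * (t / 2) ^ 2) ^ N / INR (fact N))) 0).
  { replace (Finite 0) with (Rbar_mult Cst 0) by (simpl; f_equal; ring).
    apply is_lim_seq_scal_l. apply is_lim_seq_Reals. apply cv_speed_pow_fact. }
  assert (HSQ : is_lim_seq (fun N => S' N - Q N) 0).
  { apply is_lim_seq_le_le with (u := fun N => - (Cst * ((2 * (t / 2) ^ 2) ^ N / INR (fact N))))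
      (w := fun N => Cst * ((2 * (t / 2) ^ 2) ^ N / INR (fact N))).
    - intros N. pose proof (SQ_diff p t cc N Hc) as H. fold Cst in H.
      unfold S', Q. apply Rabs_le_between.
      replace (Cst * ((2 * (t / 2) ^ 2) ^ N / INR (fact N))) with (Cst * (2 * (t / 2) ^ 2) ^ N / INR (fact N)) by (unfold Rdiv; ring).
      exact H.
    - pose proof (proj1 (is_lim_seq_opp _ _) HD) as H'. simpl in H'. rewrite Ropp_0 in H'. exact H'.
    - exact HD. }
  assert (HQ : is_lim_seq Q L).
  { apply (is_lim_seq_ext (fun N => S' N - (S' N - Q N))). intros; ring.
    replace L with (L - 0) by ring. apply is_lim_seq_minus'; auto. }
  assert (Hlim : is_lim_seq (fun N => Rabs (Q (N + S R0)%nat - Q (S R0))) (Rabs (L - Q (S R0)))).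
  { apply (is_lim_seq_abs _ (Finite (L - Q (S R0)))). apply is_lim_seq_minus'.
    apply (is_lim_seq_incr_n Q). exact HQ. apply is_lim_seq_const. }
  assert (Hb : forall N, Rabs (Q (N + S R0)%nat - Q (S R0)) <= B).
  { intros N. unfold Q. rewrite Nat.add_comm, fsum_add.
    replace (fsum (S R0) (fun k => cc k * besselJ (2 * k + p) t) +
       fsum N (fun i => cc (S R0 + i)%nat * besselJ (2 * (S R0 + i) + p) t) -
       fsum (S R0) (fun k => cc k * besselJ (2 * k + p) t))
      with (fsum N (fun i => cc (S R0 + i)%nat * besselJ (2 * (S R0 + i) + p) t)) by ring.
    eapply Rle_trans; [apply fsum_abs|]. eapply Rle_trans; [|apply (HB N)].
    rewrite <- fsum_scal. apply fsum_le. intros i _. rewrite Rabs_mult.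
    apply Rmult_le_compat; try apply Rabs_pos. apply Hc. apply besselJ_bound. }
  pose proof (is_lim_seq_le _ _ _ _ Hb Hlim (is_lim_seq_const _)) as H. simpl in H. exact H.
Qed.

Lemma exp_pow_n x n : exp x ^ n = exp (INR n * x).
Proof.
  induction n. simpl. rewrite Rmult_0_l, exp_0; auto.
  rewrite <- tech_pow_Rmult, IHn, <- exp_plus. f_equal. rewrite S_INR; ring.
Qed.

Lemma e_sq_ge_6 : 6 <= exp 1 ^ 2.
Proof.
  assert (H : exp 1 = exp (1/8) ^ 8) by (rewrite exp_pow_n; f_equal; simpl; field).
  assert (H1 : 1 + 1/8 <= exp (1/8)) by apply exp_ineq1_le.
  assert (H2 : (1 + 1/8) ^ 8 <= exp (1/8) ^ 8) by (apply pow_incr; lra).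
  rewrite H. assert (6 <= ((1 + 1/8) ^ 8) ^ 2) by (simpl; lra).
  assert (((1 + 1/8) ^ 8) ^ 2 <= (exp (1/8) ^ 8) ^ 2).
  { apply pow_incr. split; [|auto]. apply pow_le; lra. }
  lra.
Qed.

(* (1+1/m)^m <= e, in the form (m+1)^m <= e m^m *)
Lemma succ_pow_le m : (1 <= m)%nat -> INR (S m) ^ m <= exp 1 * INR m ^ m.
Proof.
  intros Hm. assert (Hp : 0 < INR m) by (apply lt_0_INR; lia).
  replace (INR (S m)) with (INR m * (1 + / INR m)) by (rewrite S_INR; field; lra).
  rewrite Rpow_mult_distr, (Rmult_comm (exp 1)). apply Rmult_le_compat_l. apply pow_le; lra.
  apply Rle_trans with (exp (/ INR m) ^ m).
  apply pow_incr. split. assert (0 < / INR m) by (apply Rinv_0_lt_compat; lra). lra. apply exp_ineq1_le.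
  rewrite exp_pow_n. right. f_equal. field. lra.
Qed.

Lemma stirling_weak m : (2 <= m)%nat -> INR m ^ m * exp 1 ^ 2 <= 2 * exp 1 ^ m * INR (fact m).
Proof.
  intros Hm. induction Hm.
  - simpl. lra.
  - assert (Hs := succ_pow_le m ltac:(lia)).
    rewrite fact_simpl, mult_INR.
    rewrite <- (tech_pow_Rmult (INR (S m))), <- (tech_pow_Rmult (exp 1) m).
    assert (0 < exp 1) by apply exp_pos.
    assert (0 <= INR (S m)) by apply pos_INR.
    assert (INR (S m) * INR (S m) ^ m * exp 1 ^ 2 <= INR (S m) * (exp 1 * INR m ^ m) * exp 1 ^ 2).
    { apply Rmult_le_compat_r. apply pow_le; lra. apply Rmult_le_compat_l; lra. }
    assert (INR (S m) * exp 1 * (INR m ^ m * exp 1 ^ 2) <= INR (S m) * exp 1 * (2 * exp 1 ^ m * INR (fact m))).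
    { apply Rmult_le_compat_l. apply Rmult_le_pos; lra. exact IHHm. }
    lra.
Qed.

Lemma ln_div' x y : 0 < x -> 0 < y -> ln (x / y) = ln x - ln y.
Proof. intros. unfold Rdiv. rewrite ln_mult, ln_Rinv; try ring; try apply Rinv_0_lt_compat; auto. Qed.

Lemma exp_le_mono a b : a <= b -> exp a <= exp b.
Proof. intros [H|H]. left; apply exp_increasing; auto. subst; lra. Qed.

Lemma rpower_mono tau r M : 0 < tau -> tau < r -> r <= M ->
  Rpower (tau / M) M <= Rpower (tau / r) r.
Proof.
  intros H1 H2 H3. unfold Rpower. apply exp_le_mono.
  rewrite !ln_div' by lra.
  assert (A : ln tau < ln r) by (apply ln_increasing; lra).
  assert (D : ln r <= ln M).
  { destruct (Req_dec r M). subst; lra. left; apply ln_increasing; lra. }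
  nra.
Qed.

Lemma geom_sum q n : fsum n (fun i => q ^ i) * (1 - q) = 1 - q ^ n.
Proof. induction n; simpl. ring. rewrite Rmult_plus_distr_r, IHn. ring. Qed.

Lemma tail_bound s r m0 n : 0 < s -> exp 1 * s < r -> r < INR m0 -> (2 <= m0)%nat ->
  2 * fsum n (fun i => s ^ (m0 + 2 * i) / INR (fact (m0 + 2 * i))) <= 4 / 5 * Rpower (exp 1 * s / r) r.
Proof.
  intros Hs Hr Hm Hm2.
  set (e := exp 1). assert (He6 := e_sq_ge_6). fold e in He6.
  assert (He : 0 < e) by apply exp_pos.
  set (q := / e ^ 2). assert (Hq : 0 < q < 1).
  { unfold q. split. apply Rinv_0_lt_compat; lra. rewrite <- Rinv_1. apply Rinv_lt_contravar; lra. }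
  set (u := fun i => s ^ (m0 + 2 * i) / INR (fact (m0 + 2 * i))).
  assert (Hu0 : forall i, 0 <= u i).
  { intros i. unfold u. apply Rmult_le_pos. apply pow_le; lra. left; apply Rinv_0_lt_compat, INR_fact_lt_0. }
  assert (Hstep : forall i, u (S i) <= q * u i).
  { intros i. unfold u.
    replace (m0 + 2 * S i)%nat with (S (S (m0 + 2 * i))) by lia.
    set (m := (m0 + 2 * i)%nat).
    assert (Hmm : INR m0 <= INR m) by (apply le_INR; unfold m; lia).
    rewrite !fact_simpl, !mult_INR. rewrite <- !tech_pow_Rmult.
    assert (P := INR_fact_lt_0 m).
    rewrite !S_INR. assert (0 <= INR m) by apply pos_INR.
    assert (Hsq : (e * s) ^ 2 <= (INR m + 1 + 1) * (INR m + 1)).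
    { assert (0 <= e * s) by (apply Rmult_le_pos; lra). assert (e * s < INR m) by (unfold e; lra). simpl. nra. }
    unfold q. rewrite Rpow_mult_distr in Hsq.
    assert (0 <= s ^ m) by (apply pow_le; lra).
    assert (s * (s * s ^ m) / ((INR m + 1 + 1) * ((INR m + 1) * INR (fact m))) =
            (s ^ 2 / ((INR m + 1 + 1) * (INR m + 1))) * (s ^ m / INR (fact m))) by (field; lra).
    rewrite H1. apply Rmult_le_compat_r. apply Rmult_le_pos; [lra| left; apply Rinv_0_lt_compat; lra].
    apply (Rmult_le_reg_l (e ^ 2 * ((INR m + 1 + 1) * (INR m + 1)))).
    apply Rmult_lt_0_compat. apply pow_lt; lra. nra.
    replace (e ^ 2 * ((INR m + 1 + 1) * (INR m + 1)) * (s ^ 2 / ((INR m + 1 + 1) * (INR m + 1)))) with (e ^ 2 * s ^ 2)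
      by (field; lra).
    replace (e ^ 2 * ((INR m + 1 + 1) * (INR m + 1)) * / e ^ 2) with ((INR m + 1 + 1) * (INR m + 1))
      by (field; lra).
    lra. }
  assert (Hgeo : forall i, u i <= q ^ i * u 0%nat).
  { induction i. simpl; lra. eapply Rle_trans. apply Hstep. simpl.
    rewrite Rmult_assoc. apply Rmult_le_compat_l; lra. }
  assert (Hsum : fsum n u <= u 0%nat / (1 - q)).
  { apply Rle_trans with (fsum n (fun i => u 0%nat * q ^ i)).
    apply fsum_le. intros i _. rewrite Rmult_comm. apply Hgeo.
    rewrite fsum_scal. unfold Rdiv. apply Rmult_le_compat_l. apply Hu0.
    apply (Rmult_le_reg_r (1 - q)). lra. rewrite geom_sum. rewrite Rinv_l by lra.
    assert (0 < q ^ n) by (apply pow_lt; lra). lra. }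
  assert (Hm0 : 0 < INR m0) by (apply lt_0_INR; lia).
  assert (HSt := stirling_weak m0 Hm2). fold e in HSt.
  assert (Hu : u 0%nat <= 2 / e ^ 2 * Rpower (e * s / INR m0) (INR m0)).
  { unfold u. rewrite Nat.mul_0_r, Nat.add_0_r. rewrite Rpower_pow.
    2: { apply Rdiv_lt_0_compat; [apply Rmult_lt_0_compat|]; lra. }
    assert (P := INR_fact_lt_0 m0).
    assert (0 < INR m0 ^ m0) by (apply pow_lt; lra).
    unfold Rdiv. rewrite !Rpow_mult_distr, pow_inv.
    apply (Rmult_le_reg_r (INR (fact m0) * INR m0 ^ m0 * e ^ 2)).
    { repeat apply Rmult_lt_0_compat; try lra; apply pow_lt; lra. }
    replace (s ^ m0 * / INR (fact m0) * (INR (fact m0) * INR m0 ^ m0 * e ^ 2)) with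
       (s ^ m0 * (INR m0 ^ m0 * e ^ 2)) by (field; lra).
    replace (2 * / e ^ 2 * (e ^ m0 * s ^ m0 * / INR m0 ^ m0) * (INR (fact m0) * INR m0 ^ m0 * e ^ 2))
      with (s ^ m0 * (2 * e ^ m0 * INR (fact m0))) by (field; split; lra).
    apply Rmult_le_compat_l. apply pow_le; lra. exact HSt. }
  assert (HP := rpower_mono (e * s) r (INR m0) ltac:(apply Rmult_lt_0_compat; lra) Hr ltac:(lra)).
  set (P := Rpower (e * s / r) r) in *.
  assert (HP0 : 0 < P) by (unfold P, Rpower; apply exp_pos).
  assert (Hf : u 0%nat <= 2 / e ^ 2 * P).
  { eapply Rle_trans. exact Hu. apply Rmult_le_compat_l; auto.
    apply Rmult_le_pos; [lra| left; apply Rinv_0_lt_compat, pow_lt; lra]. }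
  assert (Hfin : 2 * (u 0%nat / (1 - q)) <= 4 / 5 * P).
  { unfold q. unfold q in Hq.
    assert (HE : 0 < e ^ 2) by (apply pow_lt; lra).
    replace (1 - / e ^ 2) with ((e ^ 2 - 1) / e ^ 2) by (field; lra).
    replace (2 * (u 0%nat / ((e ^ 2 - 1) / e ^ 2))) with (2 * e ^ 2 * u 0%nat / (e ^ 2 - 1)) by (field; lra).
    apply (Rmult_le_reg_r (e ^ 2 - 1)). lra.
    replace (2 * e ^ 2 * u 0%nat / (e ^ 2 - 1) * (e ^ 2 - 1)) with (2 * e ^ 2 * u 0%nat) by (field; lra).
    assert (2 * e ^ 2 * u 0%nat <= 4 * P).
    { replace (4 * P) with (2 * e ^ 2 * (2 / e ^ 2 * P)) by (field; lra).
      apply Rmult_le_compat_l; [lra|exact Hf]. }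
    nra. }
  change (2 * fsum n u <= 4 / 5 * P). lra.
Qed.

Lemma r_exists tau eta : 0 < tau -> 0 < eta < 1 ->
  exists r, tau < r /\ eta = Rpower (tau / r) r.
Proof.
  intros Ht He.
  set (L := - ln eta).
  assert (HL : 0 < L).
  { unfold L. assert (ln eta < ln 1) by (apply ln_increasing; lra). rewrite ln_1 in H. lra. }
  set (g := fun v => tau * v * exp v - L).
  assert (Hc : continuity g).
  { unfold g. apply continuity_minus. apply continuity_mult. apply continuity_mult.
    apply continuity_const. intros x y; auto. apply derivable_continuous, derivable_id.
    apply derivable_continuous, derivable_exp. apply continuity_const. intros x y; auto. }
  set (y := L / tau + 1).
  assert (Hy : 0 < y) by (unfold y; assert (0 < L / tau) by (apply Rdiv_lt_0_compat; lra); lra).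
  assert (Hg0 : g 0 < 0) by (unfold g; lra).
  assert (Hgy : 0 < g y).
  { unfold g. assert (1 + y <= exp y) by apply exp_ineq1_le.
    assert (tau * y = L + tau) by (unfold y; field; lra).
    assert (tau * y * exp y >= tau * y * 1).
    { apply Rle_ge, Rmult_le_compat_l; [apply Rmult_le_pos|]; lra. }
    lra. }
  destruct (IVT g 0 y Hc Hy Hg0 Hgy) as [z [Hz Hgz]].
  assert (Hz0 : 0 < z).
  { destruct (Req_dec z 0) as [E|E]. subst z. lra. lra. }
  exists (tau * exp z). split.
  - assert (1 + z <= exp z) by apply exp_ineq1_le. nra.
  - unfold Rpower. unfold g in Hgz.
    replace (tau / (tau * exp z)) with (exp (- z)) by (rewrite exp_Ropp; field; split; [apply Rgt_not_eq, exp_pos|lra]).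
    rewrite ln_exp.
    replace (tau * exp z * - z) with (- L) by nra.
    unfold L. rewrite Ropp_involutive, exp_ln; lra.
Qed.

Lemma r_fun_spec tau eta : 0 < tau -> 0 < eta < 1 ->
  tau < r_fun tau eta /\ eta = Rpower (tau / r_fun tau eta) (r_fun tau eta).
Proof.
  intros Ht He. unfold r_fun.
  apply (epsilon_spec (inhabits 0) (fun r => tau < r /\ eta = Rpower (tau / r) r)).
  apply r_exists; auto.
Qed.

Lemma Rbound_spec (x : R) : 0 < x ->
  x < INR (2 * S (Z.to_nat (Int_part (x / 2)))).
Proof.
  intros Hx. destruct (base_Int_part (x / 2)) as [H1 H2].
  assert (Hnn : (0 <= Int_part (x / 2))%Z).
  { destruct (Z_lt_le_dec (Int_part (x / 2)) 0) as [Hl|Hl]; auto.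
    assert (Hl' : (Int_part (x / 2) <= -1)%Z) by lia.
    apply IZR_le in Hl'. assert (0 < x / 2) by lra. lra. }
  rewrite mult_INR, (S_INR (Z.to_nat _)), (INR_IZR_INZ (Z.to_nat _)), Z2Nat.id by auto. simpl. lra.
Qed.

Lemma B_hyp t eps p R0 :
  t <> 0 -> 0 < eps -> eps < 1 / exp 1 -> R0 = Rbound t eps -> (p <= 1)%nat ->
  forall n, 2 * fsum n (fun i => Rabs (t / 2) ^ (2 * (S R0 + i) + p) / INR (fact (2 * (S R0 + i) + p))) <= eps.
Proof.
  intros Ht He0 He1 HR Hp n.
  set (s := Rabs (t / 2)).
  assert (Hs : 0 < s) by (unfold s; apply Rabs_pos_lt; lra).
  set (tau := exp 1 * Rabs t / 2).
  assert (Htau : tau = exp 1 * s).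
  { unfold tau, s. unfold Rdiv. rewrite Rabs_mult, Rabs_inv, (Rabs_right 2) by lra. ring. }
  assert (Hee : 2 < exp 1) by (assert (1 + 1 < exp 1) by (apply exp_ineq1; lra); lra).
  assert (Heta : 0 < 5 / 4 * eps < 1).
  { split. lra. assert (1 / exp 1 < 1 / 2). { apply Rmult_lt_compat_l. lra. apply Rinv_lt_contravar; lra. } lra. }
  assert (Htau0 : 0 < tau) by (rewrite Htau; apply Rmult_lt_0_compat; [apply exp_pos|lra]).
  destruct (r_fun_spec tau (5 / 4 * eps) Htau0 Heta) as [Hr Hrr].
  set (r := r_fun tau (5 / 4 * eps)) in *.
  assert (Hrb : r < INR (2 * S R0)).
  { rewrite HR. unfold Rbound. fold tau. fold r. apply Rbound_spec. lra. }
  assert (Hrb' : r < INR (2 * S R0 + p)).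
  { eapply Rlt_le_trans; [exact Hrb|]. apply le_INR; lia. }
  pose proof (tail_bound s r (2 * S R0 + p) n Hs ltac:(lra) Hrb' ltac:(lia)) as T.
  rewrite <- Htau, <- Hrr in T.
  rewrite (fsum_ext n _ (fun i => s ^ (2 * S R0 + p + 2 * i) / INR (fact (2 * S R0 + p + 2 * i)))).
  lra.
  intros i _. replace (2 * (S R0 + i) + p)%nat with (2 * S R0 + p + 2 * i)%nat by lia. reflexivity.
Qed.

Theorem mainTheorem16 (t eps : R) (ht : t <> 0)
  (heps0 : 0 < eps) (heps1 : eps < 1 / exp 1) :
  (forall x : R, -1 <= x <= 1 ->
     Rabs (cos (t * x) -
           (besselJ 0 t +
            2 * fsum (Rbound t eps)
                  (fun j => (-1) ^ (j + 1) * besselJ (2 * (j + 1)) t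
                            * chebT (2 * (j + 1)) x))) <= eps) /\
  (forall x : R, -1 <= x <= 1 ->
     Rabs (sin (t * x) -
           2 * fsum (Rbound t eps + 1)
                 (fun k => (-1) ^ k * besselJ (2 * k + 1) t
                           * chebT (2 * k + 1) x)) <= eps).
Proof.
  set (R0 := Rbound t eps).
  split; intros x Hx; set (th := acos x); assert (Hcx : cos th = x) by (apply cos_acos; auto).
  - set (cc := fun k => wcos k * (-1) ^ k * cos (INR (2 * k) * th)).
    assert (Hc : forall k, Rabs (cc k) <= 2).
    { intros k. unfold cc. rewrite !Rabs_mult, pow_1_abs.
      assert (Rabs (cos (INR (2 * k) * th)) <= 1) by (apply Rabs_le, COS_bound).
      assert (Rabs (wcos k) <= 2) by (destruct k; simpl; rewrite Rabs_right; lra).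
      assert (0 <= Rabs (cos (INR (2 * k) * th))) by apply Rabs_pos.
      assert (0 <= Rabs (wcos k)) by apply Rabs_pos. nra. }
    assert (HS : is_lim_seq (fun N => fsum N (fun k => cc k * fsum (N - k) (bessel_term (2 * k + 0) t))) (cos (t * x))).
    { eapply is_lim_seq_ext; [|apply cos_lim]. intros N.
      transitivity (fsum N (fun n => fsum (S n) (fun k => (fun k a => cc k * bessel_term (2 * k) t a) k (n - k)%nat))).
      { apply fsum_ext. intros n _. rewrite <- Hcx, diag_cos. apply fsum_ext; intros; unfold cc; ring. }
      rewrite (fsum_triangle N (fun k a => cc k * bessel_term (2 * k) t a)). apply fsum_ext. intros k _.
      rewrite <- fsum_scal. apply fsum_ext. intros a _. rewrite Nat.add_0_r. reflexivity. }
    pose proof (generic 0 t (cos (t * x)) cc R0 eps Hc HS (B_hyp t eps 0 R0 ht heps0 heps1 eq_refl ltac:(lia))) as G.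
    replace (besselJ 0 t + 2 * fsum R0 (fun j => (-1) ^ (j + 1) * besselJ (2 * (j + 1)) t * chebT (2 * (j + 1)) x))
      with (fsum (S R0) (fun k => cc k * besselJ (2 * k + 0) t)). exact G.
    rewrite fsum_shift. unfold cc at 1. simpl wcos. rewrite Nat.mul_0_r, Nat.add_0_r.
    replace (INR 0 * th) with 0 by (simpl; ring). rewrite cos_0. rewrite <- fsum_scal.
    simpl pow. f_equal. ring. apply fsum_ext. intros j _. unfold cc, chebT. fold th.
    rewrite Nat.add_0_r, Nat.add_1_r. simpl wcos. ring.
  - set (cc := fun k => 2 * (-1) ^ k * cos (INR (2 * k + 1) * th)).
    assert (Hc : forall k, Rabs (cc k) <= 2).
    { intros k. unfold cc. rewrite !Rabs_mult, pow_1_abs, (Rabs_right 2) by lra.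
      assert (Rabs (cos (INR (2 * k + 1) * th)) <= 1) by (apply Rabs_le, COS_bound).
      lra. }
    assert (HS : is_lim_seq (fun N => fsum N (fun k => cc k * fsum (N - k) (bessel_term (2 * k + 1) t))) (sin (t * x))).
    { eapply is_lim_seq_ext; [|apply sin_lim]. intros N.
      transitivity (fsum N (fun n => fsum (S n) (fun k => (fun k a => cc k * bessel_term (2 * k + 1) t a) k (n - k)%nat))).
      { apply fsum_ext. intros n _. rewrite <- Hcx, diag_sin. apply fsum_ext; intros; unfold cc; ring. }
      rewrite (fsum_triangle N (fun k a => cc k * bessel_term (2 * k + 1) t a)). apply fsum_ext. intros k _.
      rewrite <- fsum_scal. reflexivity. }
    pose proof (generic 1 t (sin (t * x)) cc R0 eps Hc HS (B_hyp t eps 1 R0 ht heps0 heps1 eq_refl ltac:(lia))) as G.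
    replace (2 * fsum (R0 + 1) (fun k => (-1) ^ k * besselJ (2 * k + 1) t * chebT (2 * k + 1) x))
      with (fsum (S R0) (fun k => cc k * besselJ (2 * k + 1) t)). exact G.
    rewrite Nat.add_1_r, <- fsum_scal. apply fsum_ext. intros k _. unfold cc, chebT. fold th. ring.
Qed.
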